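(* In any finite ELP, for any policy $\pi$ (the conjugate policy), $Q^*\in\arg\min_{Q\in\mathcal Q}\max_{\lambda\ge0}\mathcal L_\pi(Q,\lambda)$. Equivalently, $Q^*$ is an optimal solution of the problem: minimize $\mathbb E_\pi[Q(S_T,A_T)]$ over $Q\in\mathcal Q$ subject to $Q(s,a)\ge\mathcal BQ(s,a)$ for all $(s,a)$.
   Context: A finite ELP is $(\mathcal S,\mathcal A,P,R,\rho)$ with finite $\mathcal S,\mathcal A$, reward $R:\mathcal S\to\mathbb R$, transitions $P(s'|s,a)$, distribution $\rho$, and nonempty terminal set $\mathcal S_\bot$. Under a policy $\pi$, $S_0$ is a fixed terminal state, $A_t\sim\pi(\cdot|S_t)$, $S_{t+1}\sim P(\cdot|S_t,A_t)$, and $T=\inf\{t\ge1:S_t\in\mathcal S_\bot\}$. ELP conditions: $\mathbb E_\pi[T]<\infty$ for every $\pi$; $P(s'|s,a)=\rho(s')$ for all $s\in\mathcal S_\bot$, all $a,s'$; every state is reachable under some policy. $\mathcal Q$ = all functions $\mathcal S\times\mathcal A\to\mathbb R$. $\gamma_{\mathrm{epi}}(s)=\mathbf 1[s\notin\mathcal S_\bot]$; the Bellman operator is $\mathcal BQ(s,a)=\sum_{s'}P(s'|s,a)\big(R(s')+\gamma_{\mathrm{epi}}(s')\max_{a'}Q(s',a')\big)$, and $Q^*$ is its unique fixed point. For a policy $\pi$, the Lagrangian is $\mathcal L_\pi(Q,\lambda)=\mathbb E_\pi[Q(S_T,A_T)]+\sum_{s,a}\lambda(s,a)\big(\mathcal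 BQ(s,a)-Q(s,a)\big)$ for $Q\in\mathcal Q$ and $\lambda:\mathcal S\times\mathcal A\to[0,\infty)$ (written $\lambda\ge0$), where $A_T\sim\pi(\cdot|S_T)$. *)

(* Defs.v *)
From HB Require Import structures.
From mathcomp Require Import all_boot all_order all_algebra.
From mathcomp Require Import all_classical all_reals all_analysis.
Set Implicit Arguments. Unset Strict Implicit. Unset Printing Implicit Defensive.
Import Order.TTheory GRing.Theory Num.Theory.
Local Open Scope ring_scope.
Import numFieldNormedType.Exports.
Local Open Scope classical_set_scope.

Section ELP.
Variables (R : realType) (S A : finType).

Definition is_distr (T : finType) (p : T -> R) : Prop :=
  (forall x, 0 <= p x) /\ \sum_(x : T) p x = 1.

Definition is_policy (pi : S -> A -> R) : Prop := forall s, is_distr (pi s).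

Variables (P : S -> A -> S -> R) (Rw : S -> R) (rho : S -> R) (Sbot : {set S}).

(* dist pi n s = Pr_pi(S_{n+1} = s, T >= n+1), the law of the state at time n+1
   restricted to trajectories that have not terminated before time n+1.
   S_0 is terminal, so S_1 ~ P(.|S_0,A_0) = rho. *)
Fixpoint dist (pi : S -> A -> R) (n : nat) : S -> R :=
  match n with
  | 0 => rho
  | n'.+1 => fun s' =>
      \sum_(s : S | s \notin Sbot) dist pi n' s * \sum_(a : A) pi s a * P s a s'
  end.

(* Pr_pi(T >= n+1) *)
Definition survival (pi : S -> A -> R) (n : nat) : R := \sum_(s : S) dist pi n s.

(* E_pi[T] < oo : E_pi[T] = sum_{n>=0} Pr(T >= n+1) is a convergent series *)
Definition finite_expected_T (pi : S -> A -> R) : Prop := cvgn (series (survival pi)).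

(* Pr_pi(S_T = s) for s terminal : sum_{n>=0} Pr(T = n+1, S_{n+1} = s) *)
Definition hitting_prob (pi : S -> A -> R) (s : S) : R :=
  if s \in Sbot then limn (series (fun n => dist pi n s)) else 0.

(* E_pi[Q(S_T, A_T)], A_T ~ pi(.|S_T) *)
Definition EQT (pi : S -> A -> R) (Q : S -> A -> R) : R :=
  \sum_(s : S) hitting_prob pi s * \sum_(a : A) pi s a * Q s a.

Definition is_ELP : Prop :=
  [/\ Sbot != finset.set0,
      (forall s a, is_distr (P s a)) /\ is_distr rho,
      (forall pi, is_policy pi -> finite_expected_T pi),
      (forall s a s', s \in Sbot -> P s a s' = rho s') &
      (forall s, exists pi, is_policy pi /\ exists n, 0 < dist pi n s)].

(* max_{a'} f a' over the finite action set (0 if A were empty) *)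
Definition maxA (f : A -> R) : R :=
  match [pick a : A] with
  | Some a0 => \big[Num.max/f a0]_(a : A) f a
  | None => 0
  end.

Definition gamma_epi (s : S) : R := if s \in Sbot then 0 else 1.

Definition bellman (Q : S -> A -> R) : S -> A -> R := fun s a =>
  \sum_(s' : S) P s a s' * (Rw s' + gamma_epi s' * maxA (Q s')).

Definition lagrangian (pi : S -> A -> R) (Q lam : S -> A -> R) : R :=
  EQT pi Q + \sum_(s : S) \sum_(a : A) lam s a * (bellman Q s a - Q s a).

Definition maxLag (pi : S -> A -> R) (Q : S -> A -> R) : \bar R :=
  ereal_sup [set (lagrangian pi Q lam)%:E |
               lam in [set lam : S -> A -> R | forall s a, 0 <= lam s a]].

End ELP.

(* Main.v *)
Require Import Defs.
From HB Require Import structures.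
From mathcomp Require Import all_boot all_order all_algebra.
From mathcomp Require Import all_classical all_reals all_analysis.
Import Order.TTheory GRing.Theory Num.Theory.
From mathcomp Require Import ring lra.
Local Open Scope ring_scope.

Lemma argmax_ge (R : realType) (T : finType) (x0 : T) (f : T -> R) :
  forall y, f y <= f (Order.arg_max x0 xpredT f).
Proof.
by case: (arg_maxP f (erefl true : predT x0)) => i _ H y; apply: H.
Qed.

Lemma maxA_le (R : realType) (A : finType) (f : A -> R) (a0 : A) :
  Defs.maxA f <= f (Order.arg_max a0 xpredT f).
Proof.
rewrite /Defs.maxA; case: pickP => [a1 _|h]; last by have := h a0.
by apply: bigmax_le => // *; apply: argmax_ge.
Qed.

Lemma maxA_ge (R : realType) (A : finType) (f : A -> R) (a : A) :
  f a <= Defs.maxA f.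
Proof.
rewrite /Defs.maxA; case: pickP => [a1 _|h]; last by have := h a.
exact: le_bigmax.
Qed.

Lemma sum_sub_le (R : realType) (T : finType) (P1 P2 : pred T) (F : T -> R) :
  (forall i, P1 i -> P2 i) -> (forall i, P2 i -> 0 <= F i) ->
  \sum_(i | P1 i) F i <= \sum_(i | P2 i) F i.
Proof.
move=> h12 h0; rewrite [X in X <= _]big_mkcond [X in _ <= X]big_mkcond /=.
apply: ler_sum => i _; case: (boolP (P1 i)) => p1.
  by rewrite h12.
by case: ifP => // p2; apply: h0.
Qed.

Lemma dist_ge0 (R : realType) (S A : finType) (P : S -> A -> S -> R) (rho : S -> R)
  (Sbot : {set S}) (pi : S -> A -> R) :
  (forall s a s', 0 <= P s a s') -> (forall s, 0 <= rho s) -> is_policy pi ->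
  forall n s, 0 <= dist P rho Sbot pi n s.
Proof.
move=> hP hr hpi; elim=> [|n IH] s //=.
apply: sumr_ge0 => x _; apply: mulr_ge0 => //; apply: sumr_ge0 => a _.
by apply: mulr_ge0 => //; case: (hpi x) => ->.
Qed.
Section Key.
Variables (R : realType) (S A : finType) (P : S -> A -> S -> R) (Rw : S -> R)
  (rho : S -> R) (Sbot : {set S}) (Qstar Q : S -> A -> R).
Hypothesis hELP : is_ELP P rho Sbot.
Hypothesis hfix : bellman P Rw Sbot Qstar = Qstar.
Hypothesis hQ : forall s a, bellman P Rw Sbot Q s a <= Q s a.

Lemma bellman_diff s a : bellman P Rw Sbot Qstar s a - bellman P Rw Sbot Q s a =
  \sum_s' P s a s' * (gamma_epi R Sbot s' * (Defs.maxA (Qstar s') - Defs.maxA (Q s'))).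
Proof.
rewrite /bellman -sumrB; apply: eq_bigr => s' _; ring.
Qed.

Lemma key s a : Qstar s a <= Q s a.
Proof.
case: hELP => _ [hPd hrd] hfin hterm hreach.
have hP0 : forall s a s', 0 <= P s a s' by move=> s1 a1 s2; case: (hPd s1 a1).
have hP1 : forall s a, \sum_s' P s a s' = 1 by move=> s1 a1; case: (hPd s1 a1).
have hr0 : forall s, 0 <= rho s by case: hrd.
pose D := fun x : S * A => Qstar x.1 x.2 - Q x.1 x.2.
pose mu := fun s' => Order.arg_max a xpredT (Qstar s').
pose xm := Order.arg_max (s, a) xpredT D.
pose M := D xm.
have hDM : forall y, D y <= M by move=> y; apply: argmax_ge.
rewrite -subr_ge0 -opprB oppr_ge0.
apply: (le_trans (hDM (s, a))).
rewrite leNgt; apply/negP => Mpos.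
pose E := fun s' => gamma_epi R Sbot s' * D (s', mu s').
have hg : forall s', gamma_epi R Sbot s' = 0 \/ gamma_epi R Sbot s' = 1.
  by move=> s'; rewrite /gamma_epi; case: (_ \in _); [left|right].
have hDle : forall s1 a1, D (s1, a1) <= \sum_s' P s1 a1 s' * E s'.
  move=> s1 a1; rewrite /D /=.
  have -> : Qstar s1 a1 = bellman P Rw Sbot Qstar s1 a1 by rewrite hfix.
  apply: (le_trans (lerB (lexx _) (hQ s1 a1))).
  rewrite bellman_diff; apply: ler_sum => s' _.
  apply: ler_wpM2l => //; rewrite /E; case: (hg s') => ->; first by rewrite !mul0r.
  rewrite !mul1r /D /=; apply: lerB; first exact: maxA_le.
  exact: maxA_ge.
have hEM : forall s', E s' <= M.
  move=> s'; rewrite /E; case: (hg s') => ->; first by rewrite mul0r ltW.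
  by rewrite mul1r hDM.
have supp : forall p : S -> R, (forall s', 0 <= p s') -> \sum_s' p s' = 1 ->
    M <= \sum_s' p s' * E s' -> forall s', 0 < p s' -> E s' = M.
  move=> p p0 p1 hM.
  have h0 : \sum_s' p s' * (M - E s') = 0.
    apply/eqP; rewrite eq_le; apply/andP; split.
      rewrite (eq_bigr (fun s' => p s' * M - p s' * E s')); last by move=> *; rewrite mulrBr.
      by rewrite sumrB -mulr_suml p1 mul1r subr_le0.
    by apply: sumr_ge0 => s' _; apply: mulr_ge0 => //; rewrite subr_ge0.
  move=> s' ps'.
  have hge : forall i, predT i -> 0 <= p i * (M - E i).
    by move=> i _; apply: mulr_ge0 => //; rewrite subr_ge0.
  have /eqP := psumr_eq0P hge h0 (erefl true : predT s').
  by rewrite mulf_eq0 gt_eqF //= subr_eq0 => /eqP ->.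
pose Y := [pred s' | E s' == M].
have hYnt : forall s', s' \in Y -> s' \notin Sbot.
  move=> s'; rewrite inE /E /gamma_epi; case: (s' \in Sbot) => //.
  by rewrite mul0r eq_sym gt_eqF.
have hEY : forall s', s' \in Y -> D (s', mu s') = M.
  move=> s' hs; have := hYnt _ hs; move: hs; rewrite inE /E /gamma_epi.
  by case: (s' \in Sbot) => //= /eqP; rewrite mul1r.
have hpos : forall p : S -> R, (forall s', 0 <= p s') -> \sum_s' p s' = 1 ->
    exists s', 0 < p s'.
  move=> p p0 p1; apply: contrapT => hn.
  have : \sum_s' p s' = 0.
    apply: big1 => s' _; apply/eqP; rewrite eq_le p0 andbT leNgt; apply/negP => h.
    by apply: hn; exists s'.
  by rewrite p1 => /eqP; rewrite oner_eq0.
have hYne : exists s0, s0 \in Y.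
  have [s' hs'] := hpos _ (hP0 xm.1 xm.2) (hP1 xm.1 xm.2).
  exists s'; rewrite inE; apply/eqP; apply: (supp _ (hP0 xm.1 xm.2) (hP1 xm.1 xm.2)) => //.
  by have := hDle xm.1 xm.2; rewrite -surjective_pairing.
have hYcl : forall s1, s1 \in Y -> forall s2, 0 < P s1 (mu s1) s2 -> s2 \in Y.
  move=> s1 hs1 s2 hp; rewrite inE; apply/eqP.
  apply: (supp _ (hP0 s1 (mu s1)) (hP1 s1 (mu s1))) => //.
  by rewrite -(hEY _ hs1) hDle.
have hYsum : forall s1, s1 \in Y -> \sum_(s2 in Y) P s1 (mu s1) s2 = 1.
  move=> s1 hs1; rewrite -(hP1 s1 (mu s1)) [in RHS](bigID (fun s2 => s2 \in Y)) /=.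
  rewrite [X in _ = _ + X]big1 ?addr0 // => s2 hs2.
  apply/eqP; rewrite eq_le hP0 andbT leNgt; apply/negP => h.
  by move: hs2; rewrite (hYcl _ hs1 _ h).
have [s0 hs0] := hYne.
have [pi0 [hpi0 [n0 hn0]]] := hreach s0.
pose pi' := fun s1 b => if s1 \in Y then (b == mu s1)%:R else pi0 s1 b.
have hpol : is_policy pi'.
  move=> s1; rewrite /pi'; case: (boolP (s1 \in Y)) => h; last exact: hpi0.
  split; first by move=> b; rewrite ler0n.
  by rewrite (bigD1 (mu s1)) //= eqxx big1 ?addr0 // => b /negbTE ->.
have hd0 := @dist_ge0 R S A P rho Sbot pi' hP0 hr0 hpol.
pose x := fun k => \sum_(s1 in Y) Defs.dist P rho Sbot pi' k s1.
have hpi'Y : forall s1 s2, s1 \in Y -> \sum_b pi' s1 b * P s1 b s2 = P s1 (mu s1) s2.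
  move=> s1 s2 hs1; rewrite /pi' hs1 (bigD1 (mu s1)) //= eqxx mul1r big1 ?addr0 //.
  by move=> b /negbTE ->; rewrite mul0r.
have hmono : forall k, x k <= x k.+1.
  move=> k; rewrite /x /=.
  apply: (@le_trans _ _ (\sum_(s2 in Y) \sum_(s1 in Y) Defs.dist P rho Sbot pi' k s1 * P s1 (mu s1) s2)).
    rewrite le_eqVlt; apply/orP; left; apply/eqP; rewrite exchange_big /=.
    by apply: eq_bigr => s1 hs1; rewrite -mulr_sumr hYsum // mulr1.
  apply: ler_sum => s2 _.
  rewrite (eq_bigr (fun s1 => Defs.dist P rho Sbot pi' k s1 * \sum_b pi' s1 b * P s1 b s2)); last first.
    by move=> s1 hs1; rewrite hpi'Y.
  apply: sum_sub_le; first by move=> s1 /hYnt.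
  move=> s1 _; apply: mulr_ge0 => //; apply: sumr_ge0 => b _; apply: mulr_ge0 => //.
  by case: (hpol s1) => ->.
have hx0 : forall k, 0 <= x k by move=> k; apply: sumr_ge0 => *; apply: hd0.
have [N hN] : exists N, 0 < x N.
  apply: contrapT => hn.
  have hx : forall k, x k = 0.
    move=> k; apply/eqP; rewrite eq_le hx0 andbT leNgt; apply/negP => h.
    by apply: hn; exists k.
  have hdz : forall k s1, s1 \in Y -> Defs.dist P rho Sbot pi' k s1 = 0.
    by move=> k s1 hs1; apply: (psumr_eq0P _ (hx k)) => // *; apply: hd0.
  have heq : forall k s1, Defs.dist P rho Sbot pi0 k s1 = Defs.dist P rho Sbot pi' k s1.
    elim=> [|k IH] s1 //=; apply: eq_bigr => s2 hs2; rewrite IH.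
    case: (boolP (s2 \in Y)) => h; first by rewrite hdz // !mul0r.
    by rewrite /pi' (negbTE h).
  by move: hn0; rewrite heq hdz // ltxx.
have hxN : forall d, x N <= x (N + d)%N.
  elim=> [|d IH]; first by rewrite addn0.
  by rewrite addnS; apply: le_trans IH (hmono _).
have hsurv : forall k, x k <= Defs.survival P rho Sbot pi' k.
  by move=> k; apply: sum_sub_le => // *; apply: hd0.
have /cvg_series_cvg_0 hc := hfin pi' hpol.
have [n1 _ Hn1] := cvgr_lt _ hc (x N) hN.
have hk : (n1 <= maxn n1 N)%N by rewrite leq_maxl.
have := Hn1 _ hk.
have := hxN (maxn n1 N - N)%N; rewrite subnKC ?leq_maxr // => h1 h2.
have := lt_le_trans h2 (le_trans h1 (hsurv _)); by rewrite ltxx.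
Qed.
End Key.

Lemma hit_ge0 (R : realType) (S A : finType) (P : S -> A -> S -> R) (rho : S -> R)
  (Sbot : {set S}) (pi : S -> A -> R) :
  (forall s a s', 0 <= P s a s') -> (forall s, 0 <= rho s) -> is_policy pi ->
  finite_expected_T P rho Sbot pi -> forall s, 0 <= hitting_prob P rho Sbot pi s.
Proof.
move=> hP0 hr0 hpi hfin s; rewrite /hitting_prob; case: ifP => // hs.
have hd0 := @dist_ge0 R S A P rho Sbot pi hP0 hr0 hpi.
have hsv0 : forall n, 0 <= Defs.survival P rho Sbot pi n.
  by move=> n; apply: sumr_ge0 => *; apply: hd0.
have hmon : {homo series (fun n => Defs.dist P rho Sbot pi n s) : n m / (n <= m)%N >-> n <= m}.
  by apply: nondecreasing_series => n _ _; apply: hd0.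
have hmonS : {homo series (Defs.survival P rho Sbot pi) : n m / (n <= m)%N >-> n <= m}.
  by apply: nondecreasing_series => n _ _; apply: hsv0.
have hL := nondecreasing_cvgn_le hmonS hfin.
move: hL; set L := limn _ => hL.
have hub : has_ubound (range (series (fun n => Defs.dist P rho Sbot pi n s))).
  exists L => y [n _ <-].
  apply: le_trans (hL n).
  rewrite /series /=; apply: ler_sum => k _.
  rewrite /survival (bigD1 s) //= lerDl; apply: sumr_ge0 => *; apply: hd0.
apply: limr_ge; first exact: nondecreasing_is_cvgn hmon hub.
by apply: nearW => n; rewrite /series /=; apply: sumr_ge0 => *; apply: hd0.
Qed.

Theorem mainTheorem4 (R : realType) (S A : finType)
  (P : S -> A -> S -> R) (Rw : S -> R) (rho : S -> R) (Sbot : {set S})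
  (Qstar : S -> A -> R) (pi : S -> A -> R) :
  is_ELP P rho Sbot ->
  bellman P Rw Sbot Qstar = Qstar ->
  is_policy pi ->
  (* Q* in argmin_Q max_{lambda >= 0} L_pi(Q, lambda) *)
  (forall Q : S -> A -> R,
      (maxLag P Rw rho Sbot pi Qstar <= maxLag P Rw rho Sbot pi Q)%E) /\
  (* equivalently: Q* solves  min E_pi[Q(S_T,A_T)]  s.t.  Q >= B Q *)
  ((forall s a, bellman P Rw Sbot Qstar s a <= Qstar s a) /\
   (forall Q : S -> A -> R, (forall s a, bellman P Rw Sbot Q s a <= Q s a) ->
      EQT P rho Sbot pi Qstar <= EQT P rho Sbot pi Q)).
Proof.
move=> hELP hfix hpi.
have hELP' := hELP.
case: hELP' => _ [hPd hrd] hfin _ _.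
have hP0 : forall s a s', 0 <= P s a s' by move=> s1 a1 s2; case: (hPd s1 a1).
have hr0 : forall s, 0 <= rho s by case: hrd.
have hEQT : forall Q : S -> A -> R, (forall s a, bellman P Rw Sbot Q s a <= Q s a) ->
      EQT P rho Sbot pi Qstar <= EQT P rho Sbot pi Q.
  move=> Q hQ; apply: ler_sum => s _; apply: ler_wpM2l.
    by apply: (@hit_ge0 R S A P rho Sbot pi) => //; apply: hfin.
  apply: ler_sum => a _; apply: ler_wpM2l; first by case: (hpi s) => ->.
  exact: (@key R S A P Rw rho Sbot Qstar Q hELP hfix hQ).
split; last by split => //= s a; rewrite hfix.
move=> Q.
have hsup : (maxLag P Rw rho Sbot pi Qstar <= (EQT P rho Sbot pi Qstar)%:E)%E.
  apply: ge_ereal_sup => y [lam _ <-]; rewrite lee_fin /lagrangian.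
  rewrite big1 ?addr0 // => s _; apply: big1 => a _; by rewrite hfix subrr mulr0.
apply: (le_trans hsup).
suff [lam [hlam hl]] : exists lam : S -> A -> R, (forall s a, 0 <= lam s a) /\
    EQT P rho Sbot pi Qstar <= lagrangian P Rw rho Sbot pi Q lam.
  apply: le_trans (_ : (lagrangian P Rw rho Sbot pi Q lam)%:E <= _)%E; first by rewrite lee_fin.
  by apply: ereal_sup_ubound; exists lam.
case: (pselect (forall s a, bellman P Rw Sbot Q s a <= Q s a)) => hQ.
  exists (fun _ _ => 0); split => //.
  rewrite /lagrangian big1 ?addr0; first exact: hEQT.
  by move=> s _; apply: big1 => a _; rewrite mul0r.
have [s [a hsa]] : exists s a, Q s a < bellman P Rw Sbot Q s a.
  apply: contrapT => hn; apply: hQ => s a; rewrite leNgt; apply/negP => h.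
  by apply: hn; exists s, a.
pose d := bellman P Rw Sbot Q s a - Q s a.
have hd : 0 < d by rewrite subr_gt0.
pose t := Num.max 0 ((EQT P rho Sbot pi Qstar - EQT P rho Sbot pi Q) / d).
exists (fun s' a' => if (s' == s) && (a' == a) then t else 0); split.
  by move=> s' a'; case: ifP => // _; rewrite le_max lexx.
rewrite /lagrangian (bigD1 s) //= [X in _ + (_ + X)]big1 ?addr0; last first.
  by move=> s' hs'; apply: big1 => a' _; rewrite (negbTE hs') mul0r.
rewrite eqxx /= (bigD1 a) //= eqxx [X in _ + (_ + X)]big1 ?addr0; last first.
  by move=> a' ha'; rewrite (negbTE ha') mul0r.
rewrite -/d -lerBlDl.
apply: le_trans (_ : (EQT P rho Sbot pi Qstar - EQT P rho Sbot pi Q) / d * d <= _).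
  by rewrite divfK // gt_eqF.
by apply: ler_wpM2r; [exact: ltW | rewrite le_max lexx orbT].
Qed.
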